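(* Let $X=(X_i)_{i\ge1}$ and $Y=(Y_j)_{j\ge1}$ be real-valued partially exchangeable sequences, so that there exist random probability measures $(\tilde p_1,\tilde p_2)$ on $\mathbb{R}$ such that, conditionally on $(\tilde p_1,\tilde p_2)$, all $X_i$ and $Y_j$ are independent with $X_i\sim\tilde p_1$ and $Y_j\sim\tilde p_2$. Assume that $\tilde p_1$ and $\tilde p_2$ have the same marginal distribution and that $X_1$ has finite, strictly positive variance. Then for all $i\neq i'$ and all $j$, $$-\operatorname{corr}(X_i,X_{i'})\le \operatorname{corr}(X_i,Y_j)\le \operatorname{corr}(X_i,X_{i'}).$$
   Context: Partial exchangeability of $X$ and $Y$ means that for all $n,m$ and all permutations $\pi_1$ of $\{1,\dots,n\}$ and $\pi_2$ of $\{1,\dots,m\}$, $((X_i)_{i=1}^n,(Y_j)_{j=1}^m)$ and $((X_{\pi_1(i)})_{i=1}^n,(Y_{\pi_2(j)})_{j=1}^m)$ have the same distribution; by de Finetti's theorem this is equivalent to the conditional i.i.d. representation in the claim. *)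

(* Defs.v *)
From HB Require Import structures.
From mathcomp Require Import all_boot all_order all_algebra.
From mathcomp Require Import all_classical all_reals all_analysis giry.
Set Implicit Arguments. Unset Strict Implicit. Unset Printing Implicit Defensive.
Import Order.TTheory GRing.Theory Num.Theory.
Local Open Scope classical_set_scope.
Local Open Scope ring_scope.

(* Pearson correlation coefficient of two real random variables
   (meaningful when both are square integrable with positive variance). *)
Definition corr d (T : measurableType d) (R : realType) (P : probability T R)
  (U V : T -> R) : R :=
  fine (covariance P U V) / (Num.sqrt (fine (variance P U)) * Num.sqrt (fine (variance P V))).

(* Main.v *)
Require Import Defs.
From HB Require Import structures.
From mathcomp Require Import all_boot all_order all_algebra.
From mathcomp Require Import all_classical all_reals all_analysis giry.
From mathcomp Require Import measurable_realfun.
From mathcomp Require Import ring lra.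
Import Order.TTheory GRing.Theory Num.Theory.
Local Open Scope classical_set_scope.
Local Open Scope ring_scope.

Section alg.
Context {d : measure_display} {T : measurableType d} {R : realType} (P : probability T R).

Definition Cr (U V : T -> R) : R := fine (covariance P U V).

Lemma L2_L1 (U : T -> R) : U \in Lfun P 2%:E -> U \in Lfun P 1.
Proof. by move=> h; apply: Lfun_subset12 => //; exact: fin_num_measure. Qed.

Lemma Cr_fin (U V : T -> R) : U \in Lfun P 2%:E -> V \in Lfun P 2%:E ->
  covariance P U V \is a fin_num.
Proof.
move=> hU hV; apply: covariance_fin_num; try exact: L2_L1.
exact: Lfun2_mul_Lfun1.
Qed.

Lemma CrDl (U V W : T -> R) : U \in Lfun P 2%:E -> V \in Lfun P 2%:E ->
  W \in Lfun P 2%:E -> Cr (U \+ V) W = Cr U W + Cr V W.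
Proof.
move=> hU hV hW; rewrite /Cr covarianceDl // fineD //; exact: Cr_fin.
Qed.

Lemma CrC (U V : T -> R) : Cr U V = Cr V U.
Proof. by rewrite /Cr covarianceC. Qed.

Lemma CrDr (U V W : T -> R) : U \in Lfun P 2%:E -> V \in Lfun P 2%:E ->
  W \in Lfun P 2%:E -> Cr W (U \+ V) = Cr W U + Cr W V.
Proof. by move=> hU hV hW; rewrite CrC CrDl // CrC (CrC V). Qed.

Lemma CrNl (U V : T -> R) : U \in Lfun P 2%:E -> V \in Lfun P 2%:E ->
  Cr (\- U) V = - Cr U V.
Proof.
move=> hU hV; rewrite /Cr covarianceNl ?fineN //; try exact: L2_L1.
exact: Lfun2_mul_Lfun1.
Qed.

Lemma CrNr (U V : T -> R) : U \in Lfun P 2%:E -> V \in Lfun P 2%:E ->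
  Cr U (\- V) = - Cr U V.
Proof. by move=> hU hV; rewrite CrC CrNl // CrC. Qed.

Lemma Cr0 (U : T -> R) : Cr (cst 0) U = 0.
Proof. by rewrite /Cr covariance_cst_l. Qed.

Lemma Cr_ge0 (U : T -> R) : 0 <= Cr U U.
Proof. by rewrite /Cr; apply: fine_ge0; exact: variance_ge0. Qed.

Lemma L2D (U V : T -> R) : U \in Lfun P 2%:E -> V \in Lfun P 2%:E ->
  (U \+ V) \in Lfun P 2%:E.
Proof.
move=> hU hV.
have h12 : (1 <= (2%:E : \bar R))%E by rewrite lee_fin ler1n.
exact: ((Lfun_addr_closed P h12).2 _ _ hU hV).
Qed.

Lemma L2N (U : T -> R) : U \in Lfun P 2%:E -> (\- U) \in Lfun P 2%:E.
Proof. move=> hU; exact: (Lfun_oppr_closed hU). Qed.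

Fixpoint Ssum (Z : nat -> T -> R) (n : nat) : T -> R :=
  if n is m.+1 then Ssum Z m \+ Z m else cst 0.

Lemma Ssum_L2 Z n : (forall a, Z a \in Lfun P 2%:E) -> Ssum Z n \in Lfun P 2%:E.
Proof.
move=> hZ; elim: n => [|n IH] /=; first exact: Lfun_cst.
exact: L2D.
Qed.

Lemma key_alg (X W : nat -> T -> R) (s s' c k : R) :
  (forall a, X a \in Lfun P 2%:E) -> (forall a, W a \in Lfun P 2%:E) ->
  (forall a, Cr (X a) (X a) = s) -> (forall a, Cr (W a) (W a) = s') ->
  (forall a b, a <> b -> Cr (X a) (X b) = c) ->
  (forall a b, a <> b -> Cr (W a) (W b) = c) ->
  (forall a b, Cr (X a) (W b) = k) ->
  0 <= c + k.
Proof.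
move=> hX hW hs hs' hc hc' hk.
pose Z a := X a \+ W a.
have hZ a : Z a \in Lfun P 2%:E by exact: L2D.
pose al := s + s' + 2 * k.
pose be := 2 * (c + k).
have ZZ a : Cr (Z a) (Z a) = al.
  rewrite /Z CrDl ?CrDr //; last exact: L2D.
  by rewrite hs hs' hk (CrC (W a)) hk /al; ring.

have ZZ' a b : a <> b -> Cr (Z a) (Z b) = be.
  move=> ab; rewrite /Z CrDl ?CrDr //; last exact: L2D.
  by rewrite hc // hc' // hk (CrC (W a)) hk /be; ring.
have SZ m n : (m <= n)%N -> Cr (Ssum Z m) (Z n) = m%:R * be.
  elim: m => [|m IH] mn /=; first by rewrite Cr0 mul0r.
  rewrite (CrDl _ _ _ (Ssum_L2 Z m hZ) (hZ m) (hZ n)) IH ?(ltnW mn) // ZZ'; last first.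
    by move=> e; rewrite e ltnn in mn.
  by rewrite -addn1 natrD; ring.
have SS n : Cr (Ssum Z n) (Ssum Z n) = n%:R * al + n%:R * (n%:R - 1) * be.
  elim: n => [|n IH] /=; first by rewrite Cr0 !mul0r add0r.
  have hS := Ssum_L2 Z n hZ.
  have hS1 : Ssum Z n \+ Z n \in Lfun P 2%:E := L2D _ _ hS (hZ n).
  rewrite (CrDl _ _ _ hS (hZ n) hS1) (CrDr _ _ _ hS (hZ n) hS) (CrDr _ _ _ hS (hZ n) (hZ n)).
  rewrite IH SZ // (CrC (Z n)) SZ // ZZ.
  rewrite -addn1 natrD; ring.
have pos n : 0 <= n%:R * al + n%:R * (n%:R - 1) * be by rewrite -SS; exact: Cr_ge0.
rewrite -(@pmulr_rge0 _ 2) // mulrC.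
rewrite leNgt; apply/negP => ckn.
have ben : be < 0 by rewrite /be mulrC.
pose q := al / (- be).
have hq := truncnS_gt q.
move: (pos (Num.truncn q).+2).
set m := (Num.truncn q).+1 in hq *.
rewrite -addn1 natrD addrK -mulrA -mulrDr pmulr_rge0; last by rewrite ltr_wpDl.
move: hq; rewrite /q ltr_pdivrMr ?oppr_gt0 // => hq h.
have : al + m%:R * be < 0 by rewrite mulrN in hq; lra.
by rewrite ltNge h.
Qed.
End alg.

Section law.
Context {d : measure_display} {T : measurableType d} {R : realType} {P : probability T R}.
Local Open Scope ereal_scope.

Lemma int_law {d2} {T2 : measurableType d2} {phi phi' : T -> T2} :
  measurable_fun setT phi -> measurable_fun setT phi' ->
  (forall A, measurable A -> P (phi @^-1` A) = P (phi' @^-1` A)) ->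
  forall f : T2 -> \bar R, measurable_fun [set: T2] f ->
  \int[P]_x f (phi x) = \int[P]_x f (phi' x).
Proof.
move=> mp mp' eqP f mf.
have key : forall g : T2 -> \bar R, measurable_fun [set: T2] g -> (forall z, 0 <= g z) ->
    \int[P]_x g (phi x) = \int[P]_x g (phi' x).
  move=> g mg g0.
  have h1 := ge0_integral_pushforward mp P measurableT mg (fun z _ => g0 z).
  have h2 := ge0_integral_pushforward mp' P measurableT mg (fun z _ => g0 z).
  rewrite preimage_setT in h1; rewrite preimage_setT in h2.
  transitivity (\int[pushforward P phi]_y g y); first by rewrite h1.
  transitivity (\int[pushforward P phi']_y g y); last by rewrite h2.
  apply: eq_measure_integral => A mA _ /=; by rewrite /pushforward eqP.
transitivity (\int[P]_x (f \o phi) x); first by [].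
transitivity (\int[P]_x (f \o phi') x); last by [].
rewrite (integralE _ _ (f \o phi)) (integralE _ _ (f \o phi')).
rewrite (funepos_comp f phi) (funeneg_comp f phi) (funepos_comp f phi') (funeneg_comp f phi').
rewrite (key (f^\+)) ?(key (f^\-)) //.
all: first [exact: measurable_funepos mf | exact: measurable_funeneg mf |
  (by move=> z; exact: funepos_ge0) | (by move=> z; exact: funeneg_ge0)].
Qed.

Lemma pair_law {U V U' V' : T -> R} :
  measurable_fun setT U -> measurable_fun setT V ->
  measurable_fun setT U' -> measurable_fun setT V' ->
  (forall A B, measurable A -> measurable B ->
     P (U @^-1` A `&` V @^-1` B) = P (U' @^-1` A `&` V' @^-1` B)) ->
  forall C : set (R * R), measurable C ->
  P ((fun x => (U x, V x)) @^-1` C) = P ((fun x => (U' x, V' x)) @^-1` C).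
Proof.
move=> mU mV mU' mV' h C mC.
have mp := measurable_fun_pair mU mV.
have mp' := measurable_fun_pair mU' mV'.
have := @measure_unique _ R _ _ (fun _ => setT) (measurable_prod_measurableType _ _) _ _ _
  (pushforward P (fun x => (U x, V x))) (pushforward P (fun x => (U' x, V' x))) _ _ C mC.
apply.
- move=> _ _ [A mA [B mB <-]] [A' mA' [B' mB' <-]].
  by rewrite -setXI; exists (A `&` A'); [exact: measurableI|exists (B `&` B') => //; exact: measurableI].
- by move=> _; exists setT => //; exists setT => //; rewrite setXTT.
- by rewrite bigcup_const.
- by move=> _ [A mA [B mB <-]]; rewrite /pushforward; exact: h.
- by move=> k; change (P [set: T] < +oo); rewrite probability_setT ltry.
Qed.

Lemma E_law {U U' : T -> R} : measurable_fun setT U -> measurable_fun setT U' ->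
  (forall A, measurable A -> P (U @^-1` A) = P (U' @^-1` A)) ->
  'E_P[U] = 'E_P[U'].
Proof.
move=> mU mU' h; rewrite expectation.unlock.
apply: (int_law mU mU' h EFin).
exact/measurable_EFinP.
Qed.

Lemma L2_law {U U' : T -> R} : measurable_fun setT U -> measurable_fun setT U' ->
  (forall A, measurable A -> P (U @^-1` A) = P (U' @^-1` A)) ->
  U \in Lfun P 2%:E -> U' \in Lfun P 2%:E.
Proof.
move=> mU mU' h /andP[_]; rewrite !inE /= /finite_norm => hU.
apply/andP; split; first by rewrite inE.
rewrite inE /= /finite_norm.
suff -> : 'N[P]_2%:E[EFin \o U'] = 'N[P]_2%:E[EFin \o U] by [].
rewrite Lnorm.unlock /=; congr (_ `^ _).
apply: (int_law mU' mU (fun A mA => esym (h A mA)) (fun z => `|z%:E| `^ 2)).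
have h1 : measurable_fun [set: R] (fun z : R => `|z%:E|).
  by apply: (@measurableT_comp _ _ _ _ _ _ abse _ (@EFin R)).
apply: (@measurableT_comp _ _ _ _ _ _ (fun x : \bar R => x `^ 2) _ (fun z : R => `|z%:E|)) => //.
exact: measurable_poweR.
Qed.

Lemma cov_law {U V U' V' : T -> R} :
  measurable_fun setT U -> measurable_fun setT V ->
  measurable_fun setT U' -> measurable_fun setT V' ->
  (forall A B, measurable A -> measurable B ->
     P (U @^-1` A `&` V @^-1` B) = P (U' @^-1` A `&` V' @^-1` B)) ->
  'E_P[U] = 'E_P[U'] -> 'E_P[V] = 'E_P[V'] ->
  covariance P U V = covariance P U' V'.
Proof.
move=> mU mV mU' mV' h EU EV.
rewrite covariance.unlock EU EV expectation.unlock.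
set a := fine _; set b := fine _.
apply: (int_law (measurable_fun_pair mU mV) (measurable_fun_pair mU' mV')
  (pair_law mU mV mU' mV' h) (fun z => ((z.1 - a) * (z.2 - b))%:E)).
by apply/measurable_EFinP; apply: measurable_funM; apply: measurable_funB.
Qed.
End law.

Section sel.
Context {R : realType}.
Definition sel (a b : nat) (A B : set R) (i : nat) : set R :=
  if i == a then A else if i == b then B else setT.

Lemma sel_meas a b A B i : measurable A -> measurable B -> measurable (sel a b A B i).
Proof. by move=> mA mB; rewrite /sel; case: ifP => // _; case: ifP. Qed.

Lemma sel_prop n a b A B (F : nat -> R) : a <> b -> (a < n)%N -> (b < n)%N ->
  (forall i : 'I_n, sel a b A B i (F i)) <-> (A (F a) /\ B (F b)).
Proof.
move=> ab ha hb; split.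
  move=> h; split.
    by have := h (Ordinal ha); rewrite /sel /= eqxx.
  have := h (Ordinal hb); rewrite /sel /=.
  case: eqP => [e|_]; first by exfalso; exact: ab.
  by rewrite eqxx.
move=> [hA hB] i; rewrite /sel.
case: eqP => [->//|_]; case: eqP => [->//|_] //.
Qed.

Lemma sel_prod n a b A B (mu : set R -> \bar R) : a <> b -> (a < n)%N -> (b < n)%N ->
  mu setT = 1%E ->
  (\prod_(i < n) mu (sel a b A B i) = mu A * mu B)%E.
Proof.
move=> ab ha hb mu1.
rewrite (bigD1 (Ordinal ha)) //= (bigD1 (Ordinal hb)) /=; last first.
  by apply/eqP => -[] e; apply: ab.
rewrite big1 ?mule1.
  rewrite /sel eqxx; case: eqP => [e|_]; first by exfalso; apply: ab.
  by rewrite eqxx.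
move=> i /andP[ia ib]; rewrite /sel.
case: eqP => [e|_]; first by move: ia; rewrite -(inj_eq val_inj) /= e eqxx.
case: eqP => [e|_] //; by move: ib; rewrite -(inj_eq val_inj) /= e eqxx.
Qed.
End sel.

Theorem proposition1 (d : measure_display) (T : measurableType d) (R : realType)
  (P : probability T R) (X Y : nat -> T -> R) (p1 p2 : T -> giry R R) :
  (forall i, measurable_fun setT (X i)) ->
  (forall j, measurable_fun setT (Y j)) ->
  measurable_fun setT p1 -> measurable_fun setT p2 ->
  (forall w, p1 w setT = 1%E) -> (forall w, p2 w setT = 1%E) ->
  (forall (n m : nat) (A : 'I_n -> set R) (B : 'I_m -> set R)
          (D : set (giry R R * giry R R)),
     (forall i, measurable (A i)) -> (forall j, measurable (B j)) ->
     measurable D ->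
     P [set w | D (p1 w, p2 w) /\ (forall i : 'I_n, A i (X i w))
                /\ (forall j : 'I_m, B j (Y j w))]
     = (\int[P]_(w in [set w | D (p1 w, p2 w)])
          ((\prod_(i < n) p1 w (A i)) * (\prod_(j < m) p2 w (B j))))%E) ->
  (forall U : set (giry R R), measurable U -> P (p1 @^-1` U) = P (p2 @^-1` U)) ->
  X 0%N \in Lfun P 2%:E -> (0 < variance P (X 0%N))%E ->
  forall i i' j : nat, i <> i' ->
    - corr P (X i) (X i') <= corr P (X i) (Y j) <= corr P (X i) (X i').
Proof.
move=> mX mY mp1 mp2 p1T p2T H hmarg hX0 hvar i i' j ii'.
have DT : [set w | @setT (giry R R * giry R R) (p1 w, p2 w)] = setT.
  by apply/seteqP; split.
have XX a b A B : a <> b -> measurable A -> measurable B ->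
    P (X a @^-1` A `&` X b @^-1` B) = (\int[P]_w (p1 w A * p1 w B))%E.
  move=> ab mA mB.
  have ha : (a < (maxn a b).+1)%N by rewrite ltnS leq_maxl.
  have hb : (b < (maxn a b).+1)%N by rewrite ltnS leq_maxr.
  have := H (maxn a b).+1 0 (fun i => sel a b A B i) (fun _ => setT) setT
    (fun i => sel_meas _ _ _ _ _ mA mB) (fun _ => measurableT) measurableT.
  rewrite DT.
  rewrite (_ : [set w | _] = X a @^-1` A `&` X b @^-1` B); last first.
    apply/seteqP; split => w /=.
      by move=> [_ [/(@sel_prop _ _ _ _ _ _ (fun k => X k w) ab ha hb) h _]].
    move=> [hA hB]; split => //; split; last by case.
    by apply/(@sel_prop _ _ _ _ _ _ (fun k => X k w) ab ha hb).
  move=> ->; apply: eq_integral => w _.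
  by rewrite big_ord0 mule1 (@sel_prod _ _ _ _ _ _ (p1 w) ab ha hb (p1T w)).
have YY a b A B : a <> b -> measurable A -> measurable B ->
    P (Y a @^-1` A `&` Y b @^-1` B) = (\int[P]_w (p2 w A * p2 w B))%E.
  move=> ab mA mB.
  have ha : (a < (maxn a b).+1)%N by rewrite ltnS leq_maxl.
  have hb : (b < (maxn a b).+1)%N by rewrite ltnS leq_maxr.
  have := H 0 (maxn a b).+1 (fun _ => setT) (fun i => sel a b A B i) setT
    (fun _ => measurableT) (fun i => sel_meas _ _ _ _ _ mA mB) measurableT.
  rewrite DT.
  rewrite (_ : [set w | _] = Y a @^-1` A `&` Y b @^-1` B); last first.
    apply/seteqP; split => w /=.
      by move=> [_ [_ /(@sel_prop _ _ _ _ _ _ (fun k => Y k w) ab ha hb) h]].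
    move=> [hA hB]; split => //; split; first by case.
    by apply/(@sel_prop _ _ _ _ _ _ (fun k => Y k w) ab ha hb).
  move=> ->; apply: eq_integral => w _.
  by rewrite big_ord0 mul1e (@sel_prod _ _ _ _ _ _ (p2 w) ab ha hb (p2T w)).
have XY a b A B : measurable A -> measurable B ->
    P (X a @^-1` A `&` Y b @^-1` B) = (\int[P]_w (p1 w A * p2 w B))%E.
  move=> mA mB.
  have ab : a <> a.+1 by move=> /eqP; rewrite eqn_leq ltnn andbF.
  have ba : b <> b.+1 by move=> /eqP; rewrite eqn_leq ltnn andbF.
  have ha : (a < a.+2)%N by [].
  have ha' : (a.+1 < a.+2)%N by [].
  have hb : (b < b.+2)%N by [].
  have hb' : (b.+1 < b.+2)%N by [].
  have := H a.+2 b.+2 (fun i => sel a a.+1 A setT i) (fun i => sel b b.+1 B setT i) setT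
    (fun i => sel_meas _ _ _ _ _ mA measurableT)
    (fun i => sel_meas _ _ _ _ _ mB measurableT) measurableT.
  rewrite DT.
  rewrite (_ : [set w | _] = X a @^-1` A `&` Y b @^-1` B); last first.
    apply/seteqP; split => w /=.
      move=> [_ [/(@sel_prop _ _ _ _ _ _ (fun k => X k w) ab ha ha') [h _]]].
      by move=> /(@sel_prop _ _ _ _ _ _ (fun k => Y k w) ba hb hb') [h' _].
    move=> [hA hB]; split => //; split.
      by apply/(@sel_prop _ _ _ _ _ _ (fun k => X k w) ab ha ha').
    by apply/(@sel_prop _ _ _ _ _ _ (fun k => Y k w) ba hb hb').
  move=> ->; apply: eq_integral => w _.
  rewrite (@sel_prod _ _ _ _ _ _ (p1 w) ab ha ha' (p1T w)).
  by rewrite (@sel_prod _ _ _ _ _ _ (p2 w) ba hb hb' (p2T w)) p1T p2T !mule1.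
have trans A B : measurable A -> measurable B ->
    (\int[P]_w (p2 w A * p2 w B))%E = (\int[P]_w (p1 w A * p1 w B))%E.
  move=> mA mB.
  apply: (int_law mp2 mp1 (fun U mU => esym (hmarg U mU))
    (fun mu : giry R R => (mu A * mu B)%E)).
  by apply: emeasurable_funM; exact: measurable_giry_ev.
have nS b : b <> b.+1 by move=> /eqP; rewrite eqn_leq ltnn andbF.
have eX b A : measurable A -> P (X b @^-1` A) = (\int[P]_w (p1 w A * p1 w setT))%E.
  move=> mA; have := XX b b.+1 A setT (nS b) mA measurableT.
  by rewrite preimage_setT setIT.
have margX a A : measurable A -> P (X a @^-1` A) = P (X 0%N @^-1` A).
  by move=> mA; rewrite (eX a A mA) (eX 0%N A mA).
have margY b A : measurable A -> P (Y b @^-1` A) = P (X 0%N @^-1` A).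
  move=> mA; have := YY b b.+1 A setT (nS b) mA measurableT.
  by rewrite preimage_setT setIT trans // -(eX 0%N A mA).
have L2X a : X a \in Lfun P 2%:E.
  exact: (L2_law (mX 0%N) (mX a) (fun A mA => esym (margX a A mA)) hX0).
have L2Y b : Y b \in Lfun P 2%:E.
  exact: (L2_law (mX 0%N) (mY b) (fun A mA => esym (margY b A mA)) hX0).
have EX a : ('E_P[X a] = 'E_P[X 0%N])%E := E_law (mX a) (mX 0%N) (margX a).
have EY b : ('E_P[Y b] = 'E_P[X 0%N])%E := E_law (mY b) (mX 0%N) (margY b).
pose s := Cr P (X 0%N) (X 0%N).
pose c := Cr P (X 0%N) (X 1%N).
pose k := Cr P (X 0%N) (Y 0%N).
have sX a : Cr P (X a) (X a) = s.
  rewrite /s /Cr (cov_law (mX a) (mX a) (mX 0%N) (mX 0%N) _ (EX a) (EX a)) //.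
  move=> A B mA mB; rewrite -(preimage_setI (X a)) -(preimage_setI (X 0%N)).
  by rewrite (margX a (A `&` B) (measurableI _ _ mA mB)).
have sY b : Cr P (Y b) (Y b) = s.
  rewrite /s /Cr (cov_law (mY b) (mY b) (mX 0%N) (mX 0%N) _ (EY b) (EY b)) //.
  move=> A B mA mB; rewrite -(preimage_setI (Y b)) -(preimage_setI (X 0%N)).
  by rewrite (margY b (A `&` B) (measurableI _ _ mA mB)).
have n01 : (0%N <> 1%N) by [].
have cX a b : a <> b -> Cr P (X a) (X b) = c.
  move=> ab; rewrite /c /Cr (cov_law (mX a) (mX b) (mX 0%N) (mX 1%N) _ (EX a)
    (etrans (EX b) (esym (EX 1%N)))) //.
  by move=> A B mA mB; rewrite XX // XX.
have cY a b : a <> b -> Cr P (Y a) (Y b) = c.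
  move=> ab; rewrite /c /Cr (cov_law (mY a) (mY b) (mX 0%N) (mX 1%N) _ (EY a)
    (etrans (EY b) (esym (EX 1%N)))) //.
  by move=> A B mA mB; rewrite YY // trans // XX.
have kXY a b : Cr P (X a) (Y b) = k.
  rewrite /k /Cr (cov_law (mX a) (mY b) (mX 0%N) (mY 0%N) _ (EX a)
    (etrans (EY b) (esym (EY 0%N)))) //.
  by move=> A B mA mB; rewrite XY // XY.
have h1 := key_alg P X Y s s c k L2X L2Y sX sY cX cY kXY.
have L2W b : (\- Y b) \in Lfun P 2%:E := L2N P _ (L2Y b).
have sW b : Cr P (\- Y b) (\- Y b) = s.
  by rewrite (CrNl P _ _ (L2Y b) (L2W b)) (CrNr P _ _ (L2Y b) (L2Y b)) opprK sY.
have cW a b : a <> b -> Cr P (\- Y a) (\- Y b) = c.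
  move=> ab.
  by rewrite (CrNl P _ _ (L2Y a) (L2W b)) (CrNr P _ _ (L2Y a) (L2Y b)) opprK cY.
have kW a b : Cr P (X a) (\- Y b) = - k.
  by rewrite (CrNr P _ _ (L2X a) (L2Y b)) kXY.
have h2 := key_alg P X (fun b => \- Y b) s s c (- k) L2X L2W sX sW cX cW kW.
have spos : 0 < s.
  apply: fine_gt0; apply/andP; split => //.
  by rewrite ltey_eq variance_fin_num.
have corrE U V : corr P U V = Cr P U V / (Num.sqrt (Cr P U U) * Num.sqrt (Cr P V V)) by [].
rewrite !corrE !sX sY (cX _ _ ii') kXY -expr2 sqr_sqrtr ?(ltW spos) //.
rewrite -mulNr; apply/andP; split; apply: ler_wpM2r; rewrite ?invr_ge0 ?(ltW spos) //; lra.
Qed.
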